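(* Let $F$ be the infinite cyclic group with generator $a$ and identity $e$, let $k$ be a field and $kF$ the group algebra with multiplication $m$. Define a linear map $\Delta:kF\to kF\otimes kF$ by $$\Delta(e)=0,\quad \Delta(a)=e\otimes e,\quad \Delta(a^{-1})=-a^{-1}\otimes a^{-1},$$ $$\Delta(a^n)=(a\otimes 1)\Delta(a^{n-1})+e\otimes a^{n-1},\qquad \Delta(a^{-n})=-(a^{-n}\otimes 1)\Delta(a^n)(1\otimes a^{-n})\quad\text{for } n>1 .$$ Then $(kF,m,\Delta)$ is an $\epsilon$-bialgebra, i.e. $\Delta$ is coassociative, $(\Delta\otimes\mathrm{id})\Delta=(\mathrm{id}\otimes\Delta)\Delta$, and $\Delta(uv)=(u\otimes 1)\Delta(v)+\Delta(u)(1\otimes v)$ for all $u,v\in kF$.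
   Context: Here $1=e$ is the unit of $kF$, and products such as $(u\otimes 1)\Delta(v)$ are taken in the algebra $kF\otimes kF$. *)

(* Defs.v *)
(* The group algebra kF of the infinite cyclic group
   F = <a> is modelled with multinomials' monoid-algebra carrier
   {malg k[int]} (finitely supported functions int -> k, with its
   canonical k-vector-space structure); the basis element a^n is << n >>
   (F written additively: a^n <-> n : int, e <-> 0).
   kF (x) kF is modelled as k[F x F] = {malg k[int * int]}, with
   a^i (x) a^j <-> << (i, j) >>, and kF (x) kF (x) kF as
   {malg k[(int * int) * int]}. *)
From HB Require Import structures.
From mathcomp Require Import all_boot all_order all_algebra.
From mathcomp Require Import finmap.
From mathcomp Require Import monalg.
Set Implicit Arguments. Unset Strict Implicit. Unset Printing Implicit Defensive.
Import Order.TTheory GRing.Theory Num.Theory.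
Local Open Scope ring_scope.

Section GroupAlgebra.
Variable k : fieldType.

Definition galg (G : zmodType) := {malg k[G]}.

Definition gmul (G : zmodType) (u v : galg G) : galg G :=
  \sum_(i <- msupp u) \sum_(j <- msupp v) << u@_i * v@_j *g (i + j) >>.

Definition tens (G H : zmodType) (u : galg G) (v : galg H) : galg (G * H)%type :=
  \sum_(i <- msupp u) \sum_(j <- msupp v) << u@_i * v@_j *g (i, j) >>.

Definition linext (G H : zmodType) (f : G -> galg H) (w : galg G) : galg H :=
  \sum_(g <- msupp w) w@_g *: f g.

Definition apow (n : int) : galg int := << n >>.
Definition e : galg int := apow 0.
Definition a : galg int := apow 1.
Definition one1 : galg int := << 0 >>.

Fixpoint Dpos (n : nat) : galg (int * int)%type :=
  match n with
  | 0 => 0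
  | 1 => tens e e
  | S ((S m) as p) =>
      gmul (tens a one1) (Dpos p) + tens e (apow (Posz p))
  end.

Definition Dneg (n : nat) : galg (int * int)%type :=
  match n with
  | 0 => 0 (* unused *)
  | 1 => - tens (apow (-1)) (apow (-1))
  | _ => - gmul (gmul (tens (apow (- Posz n)) one1) (Dpos n))
                (tens one1 (apow (- Posz n)))
  end.

(* Delta on the basis: Negz m = -(m+1) *)
Definition Dbasis (z : int) : galg (int * int)%type :=
  match z with
  | Posz n => Dpos n
  | Negz m => Dneg m.+1
  end.

Definition Delta : galg int -> galg (int * int)%type := linext Dbasis.

Definition Delta_id : galg (int * int)%type -> galg ((int * int) * int)%type :=
  linext (fun p : int * int => tens (Dbasis p.1) (apow p.2)).

Definition reassoc : galg (int * (int * int))%type -> galg ((int * int) * int)%type :=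
  linext (fun q : int * (int * int) => << ((q.1, q.2.1), q.2.2) >>).

Definition id_Delta : galg (int * int)%type -> galg ((int * int) * int)%type :=
  linext (fun p : int * int => reassoc (tens (apow p.1) (Dbasis p.2))).

End GroupAlgebra.

(* Main.v *)
Require Import Defs.
From HB Require Import structures.
From mathcomp Require Import all_boot all_order all_algebra.
From mathcomp Require Import finmap.
From mathcomp Require Import monalg.
From mathcomp Require Import zify.
Set Implicit Arguments. Unset Strict Implicit. Unset Printing Implicit Defensive.
Import GRing.Theory Num.Theory.
Local Open Scope ring_scope.

Definition fI (p : int) : int := if (0 <= p)%R then 1 else 0.
Definition cz (n p q : int) : int := if p + q + 1 == n then fI p + fI q - 1 else 0.
Ltac czs := rewrite /cz /fI; repeat case: ifP; move=> *; lia.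
Lemma c0 p q : cz 0 p q = 0. Proof. czs. Qed.
Lemma c1 p q : cz 1 p q = if (0 == p) && (0 == q) then 1 else 0. Proof. czs. Qed.
Lemma c2 (n : nat) p q : cz n.+2 p q = cz n.+1 (p - 1) (q - 0) +
   if (0 == p) && (n.+1%:Z == q) then 1 else 0. Proof. czs. Qed.
Lemma c3 p q : cz (- 1%:Z) p q = - if (-1 == p) && (-1 == q) then 1 else 0.
Proof. czs. Qed.
Lemma c4 (m : nat) p q : cz (- m.+2%:Z) p q = - cz m.+2 (p - 0 - - m.+2%:Z) (q - - m.+2%:Z - 0).
Proof. czs. Qed.
Lemma c5 i j p q : cz (i + j) p q = cz j (p - i) (q - 0) + cz i (p - 0) (q - j).
Proof. czs. Qed.
Lemma c6 n p q r : cz n (p + q + 1) r * cz (p + q + 1) p q =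
  cz n p (q + r + 1) * cz (q + r + 1) q r.
Proof. czs. Qed.

Section Help.
Variable k : fieldType.

Lemma sum_supp1 (G : zmodType) (M : zmodType) (X : galg k G) (F : G -> M) h0 :
  (forall h, h != h0 -> F h = 0) -> (h0 \notin msupp X -> F h0 = 0) ->
  \sum_(h <- msupp X) F h = F h0.
Proof.
move=> H1 H2; have [hin|hout] := boolP (h0 \in msupp X).
  rewrite (big_fsetD1 h0) //= big1_fset ?addr0 // => h.
  by rewrite in_fsetD1 => /andP [hne _] _; apply: H1.
rewrite big1_fset ?H2 // => h hX _; apply: H1.
by apply: contraNneq hout => <-.
Qed.

Lemma mcoeffU' (G : zmodType) (c : k) (g y : G) :
  (<< c *g g >> : galg k G)@_y = if g == y then c else 0.
Proof. by rewrite mcoeffU; case: eqP. Qed.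

Lemma scaleU (G : zmodType) (c : k) (g : G) :
  << c *g g >> = c *: (<< g >> : galg k G).
Proof.
by apply/malgP => y; rewrite mcoeffZ !mcoeffU'; case: eqP; rewrite ?mulr1 ?mulr0.
Qed.

Lemma msuppU1 (G : zmodType) (g : G) : msupp (<< g >> : galg k G) = [fset g]%fset.
Proof. by rewrite msuppU oner_eq0. Qed.

Lemma gmul_coef (G : zmodType) (X Y : galg k G) y :
  (gmul X Y)@_y = \sum_(i <- msupp X) X@_i * Y@_(y - i).
Proof.
rewrite /gmul raddf_sum; apply: eq_bigr => i _.
rewrite raddf_sum /= (@sum_supp1 _ _ Y _ (y - i)).
- by rewrite mcoeffU' addrC subrK eqxx.
- move=> j hj; rewrite mcoeffU'; case: eqP => // hij.
  by move: hj; rewrite -hij addrC addKr eqxx.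
- by move=> /mcoeff_outdom ->; rewrite mulr0 mcoeffU'; case: eqP.
Qed.

Lemma gmul_coefw (G : zmodType) (X Y : galg k G) (D : {fset G}) y :
  (msupp X `<=` D)%fset -> (gmul X Y)@_y = \sum_(i <- D) X@_i * Y@_(y - i).
Proof.
move=> le; rewrite gmul_coef (big_fset_incl _ le) // => i _ /mcoeff_outdom ->.
by rewrite mul0r.
Qed.

Lemma tens_coef (G H : zmodType) (X : galg k G) (Y : galg k H) x y :
  (tens X Y)@_(x, y) = X@_x * Y@_y.
Proof.
rewrite /tens raddf_sum /= (@sum_supp1 _ _ X _ x).
- rewrite raddf_sum /= (@sum_supp1 _ _ Y _ y) ?mcoeffUU //.
    by move=> j hj; rewrite mcoeffU' xpair_eqE eqxx /= (negbTE hj).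
  by move=> /mcoeff_outdom ->; rewrite mulr0.
- move=> i hi; rewrite raddf_sum /= big1 // => j _.
  by rewrite mcoeffU' xpair_eqE (negbTE hi).
- move=> /mcoeff_outdom X0; rewrite raddf_sum /= big1 // => j _.
  by rewrite X0 mul0r mcoeffU'; case: eqP.
Qed.

Lemma linext_w (G H : zmodType) (f : G -> galg k H) w (D : {fset G}) :
  (msupp w `<=` D)%fset -> linext f w = \sum_(g <- D) w@_g *: f g.
Proof.
move=> le; rewrite /linext (big_fset_incl _ le) // => g _ /mcoeff_outdom ->.
by rewrite scale0r.
Qed.

Lemma linext_coef (G H : zmodType) (f : G -> galg k H) w y :
  (linext f w)@_y = \sum_(g <- msupp w) w@_g * (f g)@_y.
Proof. by rewrite /linext raddf_sum /=; apply: eq_bigr => g _; rewrite mcoeffZ. Qed.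

Lemma linextU (G H : zmodType) (f : G -> galg k H) g : linext f << g >> = f g.
Proof. by rewrite /linext msuppU1 big_seq_fset1 mcoeffUU scale1r. Qed.

Definition lin (G : zmodType) (M : lmodType k) (F : galg k G -> M) :=
  forall c u v, F (c *: u + v) = c *: F u + F v.

Lemma msupp_lin (G : zmodType) c (u v : galg k G) :
  (msupp (c *: u + v) `<=` msupp u `|` msupp v)%fset.
Proof.
apply: fsubset_trans (msuppD_le _ _) _; apply: fsetSU; exact: msuppZ_le.
Qed.

Lemma lin_linext (G H : zmodType) (f : G -> galg k H) : lin (linext f).
Proof.
move=> c u v; rewrite !(@linext_w _ _ f _ (msupp u `|` msupp v)%fset) ?msupp_lin //
  ?fsubsetUl ?fsubsetUr //.
rewrite scaler_sumr -big_split; apply: eq_bigr => g _.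
by rewrite mcoeffD mcoeffZ scalerDl scalerA.
Qed.

Lemma lin_gmull (G : zmodType) (w : galg k G) : lin (fun u => gmul u w).
Proof.
move=> c u v; apply/malgP => y; rewrite mcoeffD mcoeffZ.
rewrite !(@gmul_coefw _ _ _ (msupp u `|` msupp v)%fset) ?msupp_lin //
  ?fsubsetUl ?fsubsetUr //.
rewrite mulr_sumr -big_split; apply: eq_bigr => g _.
by rewrite mcoeffD mcoeffZ mulrDl mulrA.
Qed.

Lemma lin_gmulr (G : zmodType) (w : galg k G) : lin (fun u => gmul w u).
Proof.
move=> c u v; apply/malgP => y; rewrite mcoeffD mcoeffZ !gmul_coef.
rewrite mulr_sumr -big_split; apply: eq_bigr => g _.
by rewrite mcoeffD mcoeffZ mulrDr mulrCA.
Qed.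

Lemma lin_tensl (G H : zmodType) (w : galg k H) : lin (fun u : galg k G => tens u w).
Proof.
move=> c u v; apply/malgP => -[x y]; rewrite mcoeffD mcoeffZ !tens_coef.
by rewrite mcoeffD mcoeffZ mulrDl mulrA.
Qed.

Lemma lin_tensr (G H : zmodType) (w : galg k G) : lin (fun u : galg k H => tens w u).
Proof.
move=> c u v; apply/malgP => -[x y]; rewrite mcoeffD mcoeffZ !tens_coef.
by rewrite mcoeffD mcoeffZ mulrDr mulrCA.
Qed.

Lemma lin_comp (G H : zmodType) (M : lmodType k) (F : galg k G -> galg k H)
  (P : galg k H -> M) : lin F -> lin P -> lin (fun u => P (F u)).
Proof. by move=> hF hP c u v; rewrite hF hP. Qed.

Lemma lin_add (G : zmodType) (M : lmodType k) (F P : galg k G -> M) :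
  lin F -> lin P -> lin (fun u => F u + P u).
Proof. by move=> hF hP c u v; rewrite hF hP scalerDr addrACA. Qed.

Lemma lin_basis (G : zmodType) (M : lmodType k) (F : galg k G -> M) w :
  lin F -> F w = \sum_(g <- msupp w) w@_g *: F << g >>.
Proof.
move=> hF.
have F0 : F 0 = 0.
  have := hF 1 0 0; rewrite scale1r addr0 => /(congr1 (fun x => x - F 0)) /=; rewrite subrr addrK. by rewrite scale1r.
rewrite {1}(monalgE w).
elim: (msupp w : seq G) => [|g s IH]; first by rewrite !big_nil.
by rewrite !big_cons scaleU hF IH.
Qed.

Lemma lin_ext (G : zmodType) (M : lmodType k) (F P : galg k G -> M) :
  lin F -> lin P -> (forall g, F << g >> = P << g >>) -> forall w, F w = P w.
Proof.
move=> hF hP h w; rewrite (lin_basis w hF) (lin_basis w hP).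
by apply: eq_bigr => g _; rewrite h.
Qed.

Lemma tensU (G H : zmodType) (i : G) (j : H) :
  tens (<< i >> : galg k G) (<< j >> : galg k H) = << (i, j) >>.
Proof.
apply/malgP => -[x y]; rewrite tens_coef !mcoeffU' xpair_eqE.
by case: eqP; case: eqP; rewrite ?mulr1 ?mulr0.
Qed.

Lemma gmulU (G : zmodType) (i j : G) :
  gmul (<< i >> : galg k G) << j >> = << i + j >>.
Proof.
by rewrite /gmul !msuppU1 !big_seq_fset1 !mcoeffUU mulr1.
Qed.

Lemma gmulUl_coef (G : zmodType) (g : G) (X : galg k G) y :
  (gmul << g >> X)@_y = X@_(y - g).
Proof. by rewrite gmul_coef msuppU1 big_seq_fset1 mcoeffUU mul1r. Qed.

Lemma gmulUr_coef (G : zmodType) (g : G) (X : galg k G) y :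
  (gmul X << g >>)@_y = X@_(y - g).
Proof.
rewrite gmul_coef (@sum_supp1 _ _ X _ (y - g)).
- by rewrite opprB addrCA subrr addr0 mcoeffUU mulr1.
- move=> i hi; rewrite mcoeffU'; case: eqP => [h|]; last by rewrite mulr0.
  by move: hi; rewrite h opprB addrCA subrr addr0 eqxx.
- by move=> /mcoeff_outdom ->; rewrite mul0r.
Qed.

Lemma pair_sub (p q i j : int) : ((p, q) - (i, j) : int * int) = (p - i, q - j).
Proof. by []. Qed.

Lemma Dpos_SS n : Dpos k n.+2 =
  gmul (tens (a k) (one1 k)) (Dpos k n.+1) + tens (e k) (apow k (Posz n.+1)).
Proof. by []. Qed.

Lemma Dpos_coef (n : nat) p q : (Dpos k n)@_(p, q) = (cz n p q)%:~R.
Proof.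
elim: n p q => [|n IH] p q.
  rewrite mcoeff0; rewrite c0.
  by [].
case: n IH => [|n] IH.
  rewrite /= /e /apow tensU mcoeffU' xpair_eqE.
  rewrite c1.
  by case: ifP.
rewrite Dpos_SS mcoeffD /a /one1 /e /apow !tensU gmulUl_coef (IH (p - 1) (q - 0)) mcoeffU'.
rewrite xpair_eqE.
rewrite c2.
by rewrite intrD; case: ifP.
Qed.

Lemma Dneg_SS m : Dneg k m.+2 =
  - gmul (gmul (tens (apow k (- Posz m.+2)) (one1 k)) (Dpos k m.+2))
         (tens (one1 k) (apow k (- Posz m.+2))).
Proof. by []. Qed.

Lemma Dbasis_coef (n : int) p q : (Dbasis k n)@_(p, q) = (cz n p q)%:~R.
Proof.
case: n => [n|m]; first exact: Dpos_coef.
have -> : Dbasis k (Negz m) = Dneg k m.+1 by []. rewrite NegzE.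
case: m => [|m].
  rewrite /= mcoeffN /apow tensU mcoeffU' xpair_eqE.
  rewrite c3.
  by rewrite mulrNz; case: ifP.
rewrite Dneg_SS mcoeffN /one1 /apow !tensU gmulUr_coef gmulUl_coef.
rewrite (Dpos_coef m.+2 (p - 0 - - m.+2%:Z) (q - - m.+2%:Z - 0)).
rewrite c4.
by rewrite mulrNz.
Qed.

Lemma cz_out n p q : p + q + 1 != n -> cz n p q = 0.
Proof. by rewrite /cz => /negbTE ->. Qed.

Lemma leib_basis (i j : int) :
  Delta (gmul (<< i >> : galg k int) << j >>) =
  gmul (tens << i >> (one1 k)) (Delta << j >>) +
  gmul (Delta << i >>) (tens (one1 k) << j >>).
Proof.
rewrite gmulU /Delta !linextU /one1 !tensU.
have Cij := Dbasis_coef (i + j); have Ci := Dbasis_coef i; have Cj := Dbasis_coef j.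
move: (Dbasis k (i + j)) (Dbasis k i) (Dbasis k j) Cij Ci Cj => Dij Di Dj Cij Ci Cj.
apply/malgP => -[p q]; rewrite (Cij p q) mcoeffD.
rewrite [X in _ = _ + X]gmulUr_coef [X in _ = X + _]gmulUl_coef.
rewrite (Cj (p - i) (q - 0)) (Ci (p - 0) (q - j)) -intrD.
rewrite c5.
by [].
Qed.

Lemma reassoc_coef (X : galg k (int * (int * int))%type) p q r :
  (reassoc X)@_((p, q), r) = X@_(p, (q, r)).
Proof.
rewrite /reassoc linext_coef (@sum_supp1 _ _ X _ (p, (q, r))) /=.
- by rewrite mcoeffUU mulr1.
- move=> [x1 [x2 x3]] hx /=; rewrite mcoeffU'.
  move: hx; rewrite !xpair_eqE; case: (x1 == p); case: (x2 == q); case: (x3 == r) => //=.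
  by rewrite mulr0.
  by rewrite mulr0.
  by rewrite mulr0.
  by rewrite mulr0.
  by rewrite mulr0.
  by rewrite mulr0.
  by rewrite mulr0.
- by move=> /mcoeff_outdom ->; rewrite mul0r.
Qed.

Lemma coassoc_basis (n : int) :
  Delta_id (Delta (<< n >> : galg k int)) = id_Delta (Delta << n >>).
Proof.
rewrite /Delta linextU /Delta_id /id_Delta.
have Cn := Dbasis_coef n; move: (Dbasis k n) Cn => D Cn.
apply/malgP => -[[p q] r].
rewrite [LHS]linext_coef [RHS]linext_coef.
rewrite [LHS](@sum_supp1 _ _ D _ (p + q + 1, r)) /=; first last.
- by move=> /mcoeff_outdom ->; rewrite mul0r.
- move=> [g1 g2] hg /=; rewrite tens_coef Dbasis_coef /apow mcoeffU'.
  case: eqP => [e2|]; last by rewrite !mulr0.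
  rewrite cz_out ?mul0r ?mulr0 //; apply: contra hg => /eqP h.
  by rewrite h e2.
rewrite [RHS](@sum_supp1 _ _ D _ (p, q + r + 1)) /=; first last.
- by move=> /mcoeff_outdom ->; rewrite mul0r.
- move=> [g1 g2] hg /=; rewrite reassoc_coef tens_coef Dbasis_coef /apow mcoeffU'.
  case: eqP => [e1|]; last by rewrite mul0r mulr0.
  rewrite (@cz_out g2) ?mulr0 //; apply: contra hg => /eqP h.
  by rewrite h e1.
rewrite reassoc_coef !tens_coef /apow !mcoeffUU !Dbasis_coef !Cn mulr1 mul1r -!intrM.
by rewrite c6.
Qed.

End Help.

Theorem lemma3p9 (k : fieldType) :
  (* coassociativity: (Delta (x) id) Delta = (id (x) Delta) Delta *)
  (forall u : galg k int, Delta_id (Delta u) = id_Delta (Delta u)) /\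
  (* Delta(uv) = (u (x) 1) Delta(v) + Delta(u) (1 (x) v) *)
  (forall u v : galg k int,
     Delta (gmul u v) =
       gmul (tens u (one1 k)) (Delta v) + gmul (Delta u) (tens (one1 k) v)).
Proof.
split.
  apply: (@lin_ext k int _ (fun u => Delta_id (Delta u)) (fun u => id_Delta (Delta u))).
  - exact: lin_comp (lin_linext _) (lin_linext _).
  - exact: lin_comp (lin_linext _) (lin_linext _).
  - exact: coassoc_basis.
move=> u v; move: u.
apply: (@lin_ext k int _ (fun u => Delta (gmul u v))
  (fun u => gmul (tens u (one1 k)) (Delta v) + gmul (Delta u) (tens (one1 k) v))).
- exact: lin_comp (lin_gmull _) (lin_linext _).
- apply: lin_add.
    exact: lin_comp (lin_tensl _) (lin_gmull _).
  exact: lin_comp (lin_linext _) (lin_gmull _).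
move=> i; move: v.
apply: (@lin_ext k int _ (fun v => Delta (gmul << i >> v))
  (fun v => gmul (tens << i >> (one1 k)) (Delta v) + gmul (Delta << i >>) (tens (one1 k) v))).
- exact: lin_comp (lin_gmulr _) (lin_linext _).
- apply: lin_add.
    exact: lin_comp (lin_linext _) (lin_gmulr _).
  exact: lin_comp (lin_tensr _) (lin_gmulr _).
exact: leib_basis.
Qed.
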